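(* Let $\mathcal{M}^r_{g,d}$ be an expected maximal Brill--Noether locus. Then $$(2r+1)\left\lfloor\frac{-\rho(g,r,d)+1}{2}\right\rfloor-\left\lfloor\frac{-\rho(g,r,d)}{2}\right\rfloor\le g$$ holds unless $\rho(g,r,d)=-(r+1)=-\lceil\sqrt g\rceil$ is odd and $g$ is not a perfect square.
   Context: $\rho(g,r,d)=g-(r+1)(g-d+r)$; $\mathcal{M}^r_{g,d}\subseteq\mathcal{M}_g$ is the locus of smooth genus $g$ curves admitting a $g^r_d$. A Brill--Noether locus is expected maximal if $d$ is maximal such that $\rho(g,r,d)<0$ and $\rho(g,r-1,d-1)\ge0$ (up to Serre duality); concretely the expected maximal loci are the $\mathcal{M}^r_{g,d}$ with $2r\le d\le g-1$, where $1\le r\le\lceil\sqrt g-1\rceil$ if $g\ge\lfloor\sqrt g\rfloor^2+\lfloor\sqrt g\rfloor$, $1\le r\le\lfloor\sqrt g-1\rfloor$ if $g<\lfloor\sqrt g\rfloor^2+\lfloor\sqrt g\rfloor$, and $d=r+\lceil gr/(r+1)\rceil-1$. *)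

(* Defs.v *)
From Stdlib Require Import PeanoNat.
From mathcomp Require Import all_boot all_order all_algebra.
Set Implicit Arguments. Unset Strict Implicit. Unset Printing Implicit Defensive.
Import Order.TTheory GRing.Theory Num.Theory.

Definition rho (g r d : nat) : int :=
  (g%:Z - (r.+1)%:Z * (g%:Z - d%:Z + r%:Z))%R.

Definition fsqrt (g : nat) : nat := Nat.sqrt g.
Definition csqrt (g : nat) : nat :=
  if fsqrt g * fsqrt g == g then fsqrt g else (fsqrt g).+1.

Definition perfect_square (g : nat) : Prop := exists k : nat, k * k = g.

Definition ceil_div (a b : nat) : nat := (a + b - 1) %/ b.

(* Expected maximal Brill--Noether loci M^r_{g,d}, concrete description:
   2r <= d <= g-1, 1 <= r <= ceil(sqrt g - 1) = ceil(sqrt g) - 1 if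
   g >= floor(sqrt g)^2 + floor(sqrt g), 1 <= r <= floor(sqrt g - 1)
   = floor(sqrt g) - 1 otherwise, and d = r + ceil(gr/(r+1)) - 1. *)
Definition expected_maximal (g r d : nat) : Prop :=
  [/\ 2 * r <= d, d <= g - 1, 1 <= r,
      (if fsqrt g * fsqrt g + fsqrt g <= g
       then r <= csqrt g - 1 else r <= fsqrt g - 1)
    & d = r + ceil_div (g * r) r.+1 - 1].

(* Main.v *)
Require Import Defs.
From Stdlib Require Import PeanoNat.
From mathcomp Require Import all_boot all_order all_algebra.
From mathcomp Require Import zify.
Import Order.TTheory GRing.Theory Num.Theory.

Theorem lemma3p2 (g r d : nat) :
  expected_maximal g r d ->
  ~ [/\ rho g r d = (- (r.+1)%:Z)%R, r.+1 = csqrt g,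
        odd `|rho g r d|%N & ~ perfect_square g] ->
  ((2 * r + 1)%:Z * ((- rho g r d + 1) %/ 2)%Z - ((- rho g r d) %/ 2)%Z
     <= g%:Z)%R.
Proof.
case=> H2r Hdg Hr1 Hsq Hd Hexc.
have [Hf1 Hf2] := Nat.sqrt_spec g (Nat.le_0_l g).
move/ssrnat.leP: Hf1 => Hf1; move/ssrnat.ltP: Hf2 => Hf2.
rewrite -/(fsqrt g) in Hf1 Hf2 Hsq.
set f := fsqrt g in Hf1 Hf2 Hsq.
have Hcs : csqrt g <= f.+1 by rewrite /csqrt; case: ifP.
set q := g %/ r.+1.
set s := g %% r.+1.
have Hg : g = q * r.+1 + s by apply: divn_eq.
have Hs : s < r.+1 by rewrite ltn_mod.
have Hrr : r * r.+1 <= g.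
  move: Hsq; case: ifP => Hc Hr.
  - have : r <= f by lia.
    move=> Hrf; have := leq_mul Hrf Hrf; lia.
  - have : r.+1 <= f by lia.
    move=> Hrf; have := leq_mul Hrf Hrf; lia.
have Hq : r <= q by rewrite leq_divRL.
have Hcd : ceil_div (g * r) r.+1 = g - q.
  rewrite /ceil_div.
  have -> : g * r + r.+1 - 1 = (g - q) * r.+1 + (r - s).
    rewrite Hg; nia.
  by rewrite divnMDl // divn_small ?addn0 //; lia.
rewrite Hcd in Hd.
have Hrho : rho g r d = (Posz s - Posz r.+1)%R.
  rewrite /rho.
  have -> : (Posz g - Posz d + Posz r)%R = Posz q.+1 by lia.
  rewrite Hg; lia.
rewrite Hrho in Hexc *.
have [m [b [Hb Hk]]] : exists m b, b <= 1 /\ r.+1 - s = 2 * m + b.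
  exists ((r.+1 - s) %/ 2), ((r.+1 - s) %% 2); lia.
have -> : ((- (Posz s - Posz r.+1) + 1) %/ 2)%Z = Posz (m + b) by lia.
have -> : ((- (Posz s - Posz r.+1)) %/ 2)%Z = Posz m by lia.
have Hnat : (2 * r + 1) * (m + b) <= g + m.
  case: b Hb Hk => [|[|//]] _ Hk.
  - rewrite Hg; nia.
  - have [Hqr|Hqr] : q = r /\ s = 0 \/ (r < q \/ 0 < s) by lia.
    + exfalso; apply: Hexc; case: Hqr => Hqr Hs0.
      have Hgr : g = r * r.+1 by rewrite Hg Hqr Hs0 addn0.
      have Hfr : f = r.
        apply/eqP; rewrite eqn_leq; apply/andP; split.
        - rewrite leqNgt; apply/negP => Hlt.
          have := leq_mul Hlt Hlt; lia.
        - rewrite leqNgt; apply/negP => Hlt.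
          have := leq_mul Hlt Hlt; lia.
      split.
      * rewrite Hs0; lia.
      * rewrite /csqrt -/(fsqrt g) -/f Hfr.
        case: ifP => // /eqP; lia.
      * rewrite Hs0 subn0 in Hk.
        have -> : `|(Posz s - Posz r.+1)%R|%N = r.+1 by lia.
        rewrite Hk; lia.
      * move=> [x Hx].
        case: (leqP x r) => Hxr.
        - have := leq_mul Hxr Hxr; lia.
        - have := leq_mul Hxr Hxr; lia.
    + rewrite Hg; nia.
lia.
Qed.
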